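(* Let $\mathbf{f}:(\mathbf{\Delta},\mathbf{w})\to\mathbf{\Sigma}$ be a maximal branched cover of cone complexes. Then $\mathbf{f}$ is unramified along every maximal cone of $\Delta$.
   Context: A cone complex $\mathbf{\Delta}$ is a topological space $|\Delta|$ with a finite collection $\Delta$ of closed subspaces (cones) and, for each $\sigma\in\Delta$, a finitely generated group $M_\sigma$ of continuous real functions on $\sigma$, such that, with $N_\sigma=\mathrm{Hom}(M_\sigma,\mathbb{Z})$: (i) $x\mapsto[u\mapsto u(x)]$ maps $\sigma$ homeomorphically onto a rational convex polyhedral cone in $N_\sigma\otimes\mathbb{R}$; (ii) the preimage of each face of that cone is some $\tau\in\Delta$ (a face, $\tau\preceq\sigma$) with $M_\tau=\{u|_\tau\}$; (iii) $|\Delta|$ is the disjoint union of the relative interiors of the cones. It is connected iff there is a unique minimal cone $L_\Delta$. A morphism is a continuous map sending each cone into some cone $\sigma$ with pullback of $M_\sigma$ contained in the integral functions of the source cone; the relative interior of $\sigma'$ goes into that of a unique cone $f(\sigma')$. A weight $\mathbf{w}:|\Delta|\to\mathbb{Z}_{>0}$ is constant on the relative interior of each cone $\tau$, with value $w(\tau)$. $\mathrm{Tr}_g(w)(x)=\sum_{g(y)=x}w(y)$. A branched cover $\mathbf{f}:(\mathbf{\Delta},\mathbf{w})\to\mathbf{\Sigma}$ (both connected) is a morphism mapping each cone $\sigma$ isomorphically onto $f(\sigma)$ such that for each connected open $U\subset|\Sigma|$ and each connected component $V$ of $\mathbf{f}^{-1}(U)$, $\mathrm{Tr}_{\mathbf{f}|_V}(\mathbf{w})$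 is constant on $U$; its degree $d$ is $\mathrm{Tr}_{\mathbf{f}}(\mathbf{w})$. It is ramified along a cone $\tau\ne L_\Delta$ if $w(\tau)>1$. Isomorphism of branched covers: an isomorphism $\mathbf{g}$ of cone complexes with $\mathbf{f}'=\mathbf{f}\circ\mathbf{g}$, $\mathbf{g}^*\mathbf{w}=\mathbf{w}'$. For degree $d$ branched covers of $\mathbf{\Sigma}$, $\mathbf{f}'\ge\mathbf{f}$ if there is a morphism $\mathbf{g}:\mathbf{\Delta}'\to\mathbf{\Delta}$ with $\mathbf{f}'=\mathbf{f}\circ\mathbf{g}$ and $\mathrm{Tr}_{\mathbf{g}}(\mathbf{w}')=\mathbf{w}$; $\mathbf{f}$ is maximal if it is maximal in this partial order on isomorphism classes of degree $d$ branched covers of $\mathbf{\Sigma}$. A maximal cone of $\Delta$ is one that is not a proper face of another cone. *)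

(* Defs.v *)
From mathcomp Require Import all_boot all_algebra.
From mathcomp Require Import boolp classical_sets functions cardinality fsbigop
  reals topology.
From mathcomp Require Import Rstruct Rstruct_topology.
Import GRing.Theory Num.Theory.

Set Implicit Arguments.
Unset Strict Implicit.
Unset Printing Implicit Defensive.

Local Open Scope classical_set_scope.
Local Open Scope ring_scope.

Notation RR := Rdefinitions.R.

Section ConeDefs.
Variable T : topologicalType.

(* Functions on a cone sigma are encoded as functions T -> RR vanishing
   outside sigma; [restr A u] is the restriction of u to A (extended by 0). *)
Definition restr (A : set T) (u : T -> RR) : T -> RR :=
  fun x => if `[< A x >] then u x else 0.

Definition zspan (n : nat) (g : 'I_n -> T -> RR) : set (T -> RR) :=
  [set u | exists k : 'I_n -> int,
     u = fun x => \sum_(i < n) (k i)%:~R * g i x].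

Definition fg_function_group (sigma : set T) (M : set (T -> RR)) : Prop :=
  (exists (n : nat) (g : 'I_n -> T -> RR), M = zspan g) /\
  (forall u, M u -> {within sigma, continuous u}) /\
  (forall u, M u -> forall x, ~ sigma x -> u x = 0).

(* Condition (i): x |-> [u |-> u x] maps sigma homeomorphically onto a
   rational convex polyhedral cone in N_sigma (x) R = Hom(M_sigma, R),
   i.e. the cone generated by finitely many n_j in N_sigma = Hom(M_sigma, Z). *)
Definition eval_is_rational_cone (sigma : set T) (M : set (T -> RR)) : Prop :=
  (forall x y, sigma x -> sigma y -> (forall u, M u -> u x = u y) -> x = y) /\
  (* image = rational polyhedral cone generated by lattice points n_j *)
  (exists (k : nat) (nv : 'I_k -> (T -> RR) -> int),
     (forall j u v, M u -> M v -> nv j (fun x => u x + v x) = nv j u + nv j v) /\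
     (forall x, sigma x -> exists lam : 'I_k -> RR, (forall j, 0 <= lam j) /\
        forall u, M u -> u x = \sum_(j < k) lam j * (nv j u)%:~R) /\
     (forall lam : 'I_k -> RR, (forall j, 0 <= lam j) ->
        exists x, sigma x /\
        forall u, M u -> u x = \sum_(j < k) lam j * (nv j u)%:~R)) /\
  (* the inverse is continuous: the topology of sigma is the one induced
     by the functions in M (the evaluation map itself is continuous since
     the u are) *)
  (forall x U, sigma x -> nbhs x U ->
     exists (m : nat) (u : 'I_m -> T -> RR) (e : RR), 0 < e /\
       (forall i, M (u i)) /\
       forall y, sigma y -> (forall i, `|u i y - u i x| < e) -> U y).

(* Preimages in sigma of the faces of the cone: a face is the intersection of
   the cone with the kernel of a linear functional l on Hom(M,R) which is
   nonnegative on the cone; such l are phi |-> sum_i c_i phi(u_i), c_i real,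
   u_i in M. *)
Definition cone_face (sigma : set T) (M : set (T -> RR)) (F : set T) : Prop :=
  exists (k : nat) (c : 'I_k -> RR) (u : 'I_k -> T -> RR),
    (forall i, M (u i)) /\
    (forall x, sigma x -> 0 <= \sum_(i < k) c i * u i x) /\
    F = [set x | sigma x /\ \sum_(i < k) c i * u i x = 0].

Definition relint (sigma : set T) (M : set (T -> RR)) : set T :=
  [set x | sigma x /\ forall F, cone_face sigma M F -> F x -> F = sigma].

Definition is_cone_complex (D : set (set T)) (M : set T -> set (T -> RR)) :
    Prop :=
  finite_set D /\
  (forall sigma, D sigma -> closed sigma) /\
  (forall sigma, D sigma -> fg_function_group sigma (M sigma)) /\
  (forall sigma, D sigma -> eval_is_rational_cone sigma (M sigma)) /\
  (forall sigma F, D sigma -> cone_face sigma (M sigma) F ->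
     D F /\ M F = [set restr F u | u in M sigma]) /\
  (forall x, exists! sigma, D sigma /\ relint sigma (M sigma) x).

End ConeDefs.

Record coneComplex := ConeComplex {
  cc_type :> topologicalType;
  cc_cones : set (set cc_type);
  cc_M : set cc_type -> set (cc_type -> RR);
  cc_ax : is_cone_complex cc_cones cc_M }.
Arguments cc_cones : clear implicits.
Arguments cc_M : clear implicits.

Section ComplexDefs.

Definition crelint (D : coneComplex) (sigma : set D) : set D :=
  relint sigma (cc_M D sigma).

Definition is_face (D : coneComplex) (tau sigma : set D) : Prop :=
  cc_cones D sigma /\ cc_cones D tau /\ cone_face sigma (cc_M D sigma) tau.

Definition maximal_cone (D : coneComplex) (tau : set D) : Prop :=
  cc_cones D tau /\ forall sigma, is_face tau sigma -> tau = sigma.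

Definition minimal_cone (D : coneComplex) (L : set D) : Prop :=
  cc_cones D L /\ forall tau, is_face tau L -> tau = L.

Definition cc_connected (D : coneComplex) : Prop :=
  exists! L : set D, minimal_cone L.

Definition is_morphism (D S : coneComplex) (f : D -> S) : Prop :=
  continuous f /\
  forall sigma', cc_cones D sigma' -> exists sigma, cc_cones S sigma /\
    f @` sigma' `<=` sigma /\
    forall u, cc_M S sigma u -> cc_M D sigma' (restr sigma' (u \o f)).

Definition is_iso (D S : coneComplex) (g : D -> S) : Prop :=
  is_morphism g /\ exists h : S -> D, is_morphism h /\
    (forall x, h (g x) = x) /\ (forall y, g (h y) = y).

Definition is_weight (D : coneComplex) (w : D -> nat) : Prop :=
  (forall x, (0 < w x)%N) /\
  forall tau, cc_cones D tau -> forall x y,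
    crelint tau x -> crelint tau y -> w x = w y.

Definition trace (D S : coneComplex) (g : D -> S) (w : D -> nat) (V : set D)
    (x : S) : nat :=
  (\sum_(y \in V `&` g @^-1` [set x]) w y)%R.

Definition is_branched_cover (D : coneComplex) (w : D -> nat)
    (S : coneComplex) (f : D -> S) : Prop :=
  cc_connected D /\ cc_connected S /\ is_weight w /\ is_morphism f /\
  (forall sigma, cc_cones D sigma -> exists tau, cc_cones S tau /\
     f @` crelint sigma `<=` crelint tau /\
     f @` sigma = tau /\
     (forall x y, sigma x -> sigma y -> f x = f y -> x = y) /\
     [set restr sigma (u \o f) | u in cc_M S tau] = cc_M D sigma) /\
  (forall U : set S, open U -> connected U ->
     forall y, (f @^-1` U) y ->
     forall x1 x2, U x1 -> U x2 ->
       trace f w (connected_component (f @^-1` U) y) x1 =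
       trace f w (connected_component (f @^-1` U) y) x2).

Definition cover_ge (D' : coneComplex) (w' : D' -> nat)
    (D : coneComplex) (w : D -> nat) (S : coneComplex)
    (f' : D' -> S) (f : D -> S) : Prop :=
  exists g : D' -> D, is_morphism g /\ (forall x, f' x = f (g x)) /\
    forall x, trace g w' setT x = w x.

Definition cover_iso (D' : coneComplex) (w' : D' -> nat)
    (D : coneComplex) (w : D -> nat) (S : coneComplex)
    (f' : D' -> S) (f : D -> S) : Prop :=
  exists g : D' -> D, is_iso g /\ (forall x, f' x = f (g x)) /\
    forall x, w' x = w (g x).

Definition maximal_cover (D : coneComplex) (w : D -> nat)
    (S : coneComplex) (f : D -> S) : Prop :=
  forall (D' : coneComplex) (w' : D' -> nat) (f' : D' -> S),
    is_branched_cover w' f' ->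
    (forall x, trace f' w' setT x = trace f w setT x) ->
    cover_ge w' w f' f -> cover_iso w' w f' f.

Definition ramified_along (D : coneComplex) (w : D -> nat) (tau : set D) :
    Prop :=
  cc_cones D tau /\ ~ minimal_cone tau /\
  exists x, crelint tau x /\ (1 < w x)%N.

End ComplexDefs.

(* Main.v *)
Require Import Defs.
From HB Require Import structures.
From mathcomp Require Import all_boot all_algebra.
From mathcomp Require Import boolp classical_sets functions cardinality fsbigop
  reals topology.
From mathcomp Require Import Rstruct Rstruct_topology.
From mathcomp Require Import finmap.
Import GRing.Theory Num.Theory.
Set Implicit Arguments.
Unset Strict Implicit.
Unset Printing Implicit Defensive.
Local Open Scope classical_set_scope.

Definition Tc (D : coneComplex) (tau : set D) : Type :=
  (D + set_type (crelint tau))%type.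
Arguments Tc : clear implicits.
HB.instance Definition _ D tau := Choice.on (Tc D tau).

Definition gl (D : coneComplex) (tau : set D) (p : Tc D tau) : D :=
  match p with inl x => x | inr s => set_val s end.
Definition iB (D : coneComplex) (tau : set D) (x : D) : Tc D tau :=
  match pselect (crelint tau x) with
  | left h => inr (SigSub (mem_set h)) | right _ => inl x end.
Definition iota (D : coneComplex) (tau : set D) (b : bool) (x : D) : Tc D tau :=
  if b then iB tau x else inl x.

Definition Top (D : coneComplex) (tau : set D) (U : set (Tc D tau)) :=
  open ((@inl D _ : D -> Tc D tau) @^-1` U) /\ open (iB tau @^-1` U).

Lemma TopT D tau : Top [set: Tc D tau].
Proof. by split; rewrite preimage_setT; exact: openT. Qed.
Lemma TopI D tau : setI_closed (@Top D tau).
Proof. by move=> A B [? ?] [? ?]; split; rewrite preimage_setI; exact: openI. Qed.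
Lemma TopU D tau (I : Type) (f : I -> set (Tc D tau)) :
  (forall i, Top (f i)) -> Top (\bigcup_i f i).
Proof.
move=> H; split; rewrite preimage_bigcup; apply: bigcup_open => i _; apply H.
Qed.
HB.instance Definition _ D tau := isOpenTopological.Build (Tc D tau)
  (@TopT D tau) (@TopI D tau) (@TopU D tau).

Lemma openTc D tau (U : set (Tc D tau)) : open U <-> Top U.
Proof. by []. Qed.


Lemma within_comp (T U : topologicalType) (A : set T) (B : set U) (g : T -> U)
  (u : U -> RR) : continuous g -> g @` A `<=` B -> {within B, continuous u} ->
  {within A, continuous (u \o g)}.
Proof.
move=> gc gAB /subspace_continuousP uc; apply/subspace_continuousP => x Ax.
have Bgx : B (g x) by apply: gAB; exists x.
move=> W /= hW.
have := uc (g x) Bgx W hW.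
rewrite /= !nbhs_simpl /within /= => hV.
have h2 : nbhs x (g @^-1` [set y | B y -> W (u y)]) by exact: gc x _ hV.
apply: filterS h2 => z /= h Az.
by apply: h; apply: gAB; exists z.
Qed.

Lemma restr_in (T : topologicalType) (A : set T) u x : A x -> restr A u x = u x.
Proof. by move=> Ax; rewrite /restr asboolT. Qed.
Lemma restr_out (T : topologicalType) (A : set T) u x : ~ A x -> restr A u x = 0%R.
Proof. by move=> Ax; rewrite /restr asboolF. Qed.

Lemma face_sub (T : topologicalType) (s : set T) M F : cone_face s M F -> F `<=` s.
Proof. by case=> k [c [u [_ [_ ->]]]] x []. Qed.

Lemma face_refl (T : topologicalType) (s : set T) M : cone_face s M s.
Proof.
exists 0%N, (fun=> 0%R), (fun=> fun=> 0%R); split; first by case.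
split; first by move=> x _; rewrite big_ord0.
by apply/seteqP; split => x /=; [move=> sx; split => //; rewrite big_ord0| case].
Qed.


Section PartA.
Variables (D : coneComplex) (tau : set D).
Hypothesis tmax : maximal_cone tau.

Local Notation cones := (cc_cones D).
Local Notation MD := (cc_M D).
Local Notation rel := (crelint tau).

Lemma D_ax : is_cone_complex cones MD. Proof. exact: cc_ax. Qed.
Lemma D_fin : finite_set cones. Proof. by have [h _] := D_ax. Qed.
Lemma D_closed s : cones s -> closed s. Proof. by have [_ [h _]] := D_ax; apply: h. Qed.
Lemma D_fg s : cones s -> fg_function_group s (MD s).
Proof. by have [_ [_ [h _]]] := D_ax; apply: h. Qed.
Lemma D_ev s : cones s -> eval_is_rational_cone s (MD s).
Proof. by have [_ [_ [_ [h _]]]] := D_ax; apply: h. Qed.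
Lemma D_face s F : cones s -> cone_face s (MD s) F ->
  cones F /\ MD F = [set restr F u | u in MD s].
Proof. by have [_ [_ [_ [_ [h _]]]]] := D_ax; apply: h. Qed.
Lemma D_ri x : exists! s, cones s /\ relint s (MD s) x.
Proof. by have [_ [_ [_ [_ [_ h]]]]] := D_ax; apply: h. Qed.

Lemma D_ri_uniq x s1 s2 : cones s1 -> relint s1 (MD s1) x ->
  cones s2 -> relint s2 (MD s2) x -> s1 = s2.
Proof.
move=> c1 r1 c2 r2; have [s [_ hs]] := D_ri x.
by rewrite -(hs s1) // -(hs s2).
Qed.

Lemma tau_cone : cones tau. Proof. by case: tmax. Qed.

Definition mu (s : set D) : nat :=
  #|` fset_set ((cones `&` [set r | r `<=` s])%classic) |%fset.

Lemma mu_lt F s : F `<=` s -> F <> s -> cones F -> cones s -> (mu F < mu s)%N.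
Proof.
move=> Fs Fns cF cs; rewrite /mu; apply: fproper_ltn_card.
have fin1 : finite_set (cones `&` [set r | r `<=` F]).
  by apply: sub_finite_set D_fin => r [].
have fin2 : finite_set (cones `&` [set r | r `<=` s]).
  by apply: sub_finite_set D_fin => r [].
rewrite fproperE; apply/andP; split.
  by rewrite -fset_set_sub // => r [cr rF]; split => //; apply: subset_trans Fs.
apply/negP; rewrite -fset_set_sub // => h.
have [_ sF] := h s (conj cs (@subset_refl _ s)); apply: Fns.
by apply/seteqP; split.
Qed.

Lemma relint_sub (s : set D) M x : relint s M x -> s x.
Proof. by case. Qed.

Lemma rel_only s x : cones s -> s x -> rel x -> s = tau.
Proof.
move=> cs sx rx; apply: contrapT => snt.
suff H : forall n s, (mu s < n)%N -> cones s -> s x -> s <> tau -> False.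
  by apply: (H (mu s).+1 s).
elim=> [//|n IH] s' hn cs' sx' snt'.
have nri : ~ relint s' (MD s') x.
  by move=> ri; apply: snt'; apply: (D_ri_uniq cs' ri tau_cone rx).
have [F [hF [Fx FneS]]] : exists F, cone_face s' (MD s') F /\ F x /\ F <> s'.
  apply: contrapT => H; apply: nri; split => // F hF Fx.
  by apply: contrapT => ne; apply: H; exists F.
have [cF _] := D_face cs' hF.
have Fs := face_sub hF.
apply: (IH F) => //.
- by have := mu_lt Fs FneS cF cs'; move=> h; apply: leq_trans h _.
- move=> Ft; apply: FneS; rewrite Ft.
  by case: tmax => _ /(_ s'); rewrite -Ft => /(_ (conj cs' (conj cF hF))).
Qed.

Lemma rel_open : open rel.
Proof.
have -> : rel = ~` \bigcup_(s in [set s | cones s /\ s <> tau]) s.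
  apply/seteqP; split => x.
    move=> rx [s [cs snt] sx]; apply: snt; exact: rel_only rx.
  move=> nx; have [s [[cs rs] _]] := D_ri x.
  have [st|snt] := pselect (s = tau); first by rewrite /crelint -st.
  by exfalso; apply: nx; exists s => //; apply: relint_sub rs.
apply: closed_openC; apply: closed_bigcup.
  by apply: sub_finite_set D_fin => s [].
by move=> s [cs _]; apply: D_closed.
Qed.

Lemma rel_disj s y : cones s -> s <> tau -> relint s (MD s) y -> ~ rel y.
Proof. by move=> cs snt rs ry; apply: snt; apply: (D_ri_uniq cs rs tau_cone ry). Qed.

End PartA.


Section PartB.
Variables (D : coneComplex) (tau : set D).
Hypothesis tmax : maximal_cone tau.

Local Notation cones := (cc_cones D).
Local Notation MD := (cc_M D).
Local Notation rel := (crelint tau).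
Local Notation T' := (Tc D tau).
Local Notation gl := (@gl D tau).
Local Notation io := (@iota D tau).

Definition sheet (p : T') : bool := if p is inr _ then true else false.

Lemma gl_io b x : gl (io b x) = x.
Proof. by case: b => //=; rewrite /iota /iB; case: pselect. Qed.

Lemma iB_nrel x : ~ rel x -> iB tau x = inl x.
Proof. by move=> nx; rewrite /iB; case: pselect. Qed.

Lemma io_nrel b x : ~ rel x -> io b x = inl x.
Proof. by case: b => // nx; rewrite /iota iB_nrel. Qed.

Lemma sheet_io b x : rel x -> sheet (io b x) = b.
Proof. by case: b => //= rx; rewrite /iB; case: pselect. Qed.

Lemma io_sheet p : io (sheet p) (gl p) = p.
Proof.
case: p => //= s; rewrite /iB; case: pselect => h.
  by congr inr; apply/val_inj.
by exfalso; apply: h; have := set_valP s.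
Qed.

Lemma rel_inr (s : set_type rel) : rel (gl (inr s)).
Proof. by have := set_valP s. Qed.

Lemma io_eq c b x y : io c x = io b y <-> x = y /\ (c = b \/ ~ rel x).
Proof.
split.
  move=> h; have xy : x = y by rewrite -(gl_io c x) h gl_io.
  split=> //; have [rx|nx] := pselect (rel x); last by right.
  by left; rewrite -(sheet_io c rx) h -xy sheet_io.
by move=> [<- [<-|nx]] //; rewrite !io_nrel.
Qed.

Lemma io_inj b : injective (io b).
Proof. by move=> x y /io_eq []. Qed.

Lemma cont_io b : continuous (io b).
Proof. by apply/continuousP => A [h1 h2]; case: b. Qed.

Lemma cont_gl : continuous gl.
Proof.
apply/continuousP => A oA; split => //.
have -> : iB tau @^-1` (gl @^-1` A) = A.
  by apply/seteqP; split => x /=; rewrite -/(io true x) gl_io.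
exact: oA.
Qed.

Lemma open_Prel (P : Prop) : open [set x | P /\ rel x].
Proof.
have [p|np] := pselect P.
  have -> : [set x | P /\ rel x] = rel by apply/seteqP; split => x //= [].
  exact: rel_open.
have -> : [set x | P /\ rel x] = set0 by apply/seteqP; split => x //= [].
exact: open0.
Qed.

Definition Osh (b : bool) := [set p : T' | sheet p = b /\ rel (gl p)].

Lemma open_Osh b : open (Osh b).
Proof.
split.
  have -> : (@inl D _ : D -> T') @^-1` Osh b = [set x | false = b /\ rel x].
    reflexivity.
  exact: open_Prel.
have -> : iB tau @^-1` Osh b = [set x | true = b /\ rel x].
  have e1 x : gl (iB tau x) = x by exact: (gl_io true x).
  have e2 x : rel x -> sheet (iB tau x) = true by exact: (sheet_io true).
  apply/seteqP; split => x /=; rewrite /Osh /= e1.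
    by move=> [h rx]; rewrite e2 in h.
  by move=> [h rx]; rewrite e2.
exact: open_Prel.
Qed.

Lemma io_pre c b (s : set D) :
  io c @^-1` (io b @` s) = [set x | s x /\ (c = b \/ ~ rel x)].
Proof.
apply/seteqP; split => x /=.
  move=> [y sy] /io_eq [yx h]; subst y; split => //.
  by case: h => [->|]; [left|right].
move=> [sx h]; exists x => //; apply/io_eq; split => //.
by case: h => [->|]; [left|right].
Qed.

Lemma open_cpl (s : set D) (P : Prop) : closed s ->
  open (~` [set x | s x /\ (P \/ ~ rel x)]).
Proof.
move=> cs.
have -> : ~` [set x | s x /\ (P \/ ~ rel x)] = ~` s `|` [set x | ~ P /\ rel x].
  apply/seteqP; split => x /=.
    move=> h; have [sx|nsx] := pselect (s x); last by left.
    right; split.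
      by move=> p; apply: h; split => //; left.
    by apply: contrapT => nr; apply: h; split => //; right.
  by case=> [nsx [sx _] //| [np rx] [sx [p|nr]]]; [apply: np | apply: nr].
apply: openU; first exact: closed_openC.
exact: open_Prel.
Qed.

Lemma closed_io b (s : set D) : closed s -> closed (io b @` s).
Proof.
move=> cs; rewrite -openC; split.
  have h := open_cpl (false = b) cs; rewrite -io_pre preimage_setC in h.
  exact: h.
have h := open_cpl (true = b) cs; rewrite -io_pre preimage_setC in h.
exact: h.
Qed.

End PartB.

Local Open Scope ring_scope.



Section PartC.
Variables (D : coneComplex) (tau : set D).
Hypothesis tmax : maximal_cone tau.

Local Notation cones := (cc_cones D).
Local Notation MD := (cc_M D).
Local Notation rel := (crelint tau).
Local Notation T' := (Tc D tau).
Local Notation gl := (@gl D tau).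
Local Notation io := (@iota D tau).

Definition cones' : set (set T') :=
  [set X | exists s b, cones s /\ X = io b @` s].
Definition M' (X : set T') : set (T' -> RR) :=
  [set restr X (u \o gl) | u in MD (gl @` X)].

Lemma gl_img b (s : set D) : gl @` (io b @` s) = s.
Proof.
apply/seteqP; split => x /=.
  by move=> [p [y sy <-] <-]; rewrite gl_io.
by move=> sx; exists (io b x); [exists x | rewrite gl_io].
Qed.

Lemma io_gl b (s : set D) p : (io b @` s) p -> s (gl p) /\ io b (gl p) = p.
Proof. by move=> [y sy <-]; rewrite gl_io. Qed.

Lemma io_in b (s : set D) x : s x -> (io b @` s) (io b x).
Proof. by move=> sx; exists x. Qed.

Lemma M'E b (s : set D) :
  M' (io b @` s) = [set restr (io b @` s) (u \o gl) | u in MD s].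
Proof. by rewrite /M' gl_img. Qed.

Lemma restr_zspan (X : set T') n (g : 'I_n -> D -> RR) (k : 'I_n -> int) :
  restr X ((fun x => \sum_(i < n) (k i)%:~R * g i x) \o gl) =
  fun p => \sum_(i < n) (k i)%:~R * restr X (g i \o gl) p.
Proof.
apply/funext => p; have [Xp|nXp] := pselect (X p).
  by rewrite restr_in //; apply: eq_bigr => i _; rewrite restr_in.
by rewrite restr_out //; rewrite big1 // => i _; rewrite restr_out // mulr0.
Qed.

Lemma D_van s u x : cones s -> MD s u -> ~ s x -> u x = 0.
Proof. by move=> cs Mu nx; have [_ [_ h]] := D_fg cs; apply: h. Qed.

Lemma fg' b s : cones s -> fg_function_group (io b @` s) (M' (io b @` s)).
Proof.
move=> cs; have [[n [g Mg]] [cont van]] := D_fg cs.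
rewrite M'E; split; [|split].
- exists n, (fun i => restr (io b @` s) (g i \o gl)).
  apply/seteqP; split => u' /=.
    move=> [u Mu <-]; rewrite Mg in Mu; case: Mu => k ->.
    by exists k; exact: restr_zspan.
  move=> [k ->]; exists (fun x => \sum_(i < n) (k i)%:~R * g i x).
    by rewrite Mg; exists k.
  exact: restr_zspan.
- move=> u' [u Mu <-].
  apply: (@subspace_eq_continuous _ _ _ (u \o gl)).
    by move=> p /set_mem Xp; rewrite /from_subspace restr_in.
  apply: (@within_comp _ _ _ s); [exact: cont_gl| by rewrite gl_img| exact: cont].
- by move=> u' [u Mu <-] x nx; exact: restr_out.
Qed.

Lemma back b s u : cones s -> MD s u ->
  restr s (restr (io b @` s) (u \o gl) \o io b) = u.
Proof.
move=> cs Mu; apply/funext => x /=; have [sx|nx] := pselect (s x).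
  by rewrite restr_in //= restr_in /= ?gl_io //; exact: io_in.
by rewrite restr_out // (D_van cs Mu nx).
Qed.

Lemma ev' b s : cones s -> eval_is_rational_cone (io b @` s) (M' (io b @` s)).
Proof.
move=> cs; have [inj [[k [nv [add [pt lm]]]] top]] := D_ev cs.
rewrite M'E; set X := io b @` s.
split; [|split].
- move=> x y [x0 sx0 <-] [y0 sy0 <-] h; congr (io b); apply: inj => // u Mu.
  have := h (restr X (u \o gl)) (ex_intro2 _ _ u Mu erefl).
  by rewrite !restr_in /= ?gl_io //; exact: io_in.
- exists k, (fun j u' => nv j (restr s (u' \o io b))); split; [|split].
  + move=> j u' v' [u Mu <-] [v Mv <-].
    have -> : restr s ((fun x => restr X (u \o gl) x + restr X (v \o gl) x) \o io b)
      = (fun x => u x + v x).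
      apply/funext => x /=; have [sx|nx] := pselect (s x).
        by rewrite restr_in //= !restr_in /= ?gl_io //; exact: io_in.
      by rewrite restr_out // (D_van cs Mu nx) (D_van cs Mv nx) addr0.
    by rewrite !back //; apply: add.
  + move=> x' [x sx <-]; have [lam [l0 hl]] := pt x sx; exists lam; split => //.
    move=> u' [u Mu <-]; rewrite restr_in /= ?gl_io; last exact: io_in.
    by rewrite back //; apply: hl.
  + move=> lam l0; have [x [sx hx]] := lm lam l0; exists (io b x); split.
      exact: io_in.
    move=> u' [u Mu <-]; rewrite restr_in /= ?gl_io; last exact: io_in.
    by rewrite back //; apply: hx.
- move=> x' U [x sx <-] hU.
  have hU' : nbhs x (io b @^-1` U) by exact: cont_io b x _ hU.
  have [m [u [e [e0 [Mu hy]]]]] := top x _ sx hU'.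
  exists m, (fun i => restr X (u i \o gl)), e; split => //; split.
    by move=> i; exists (u i).
  move=> y' [y sy <-] hd; apply: (hy y sy) => i; have := hd i.
  by rewrite !restr_in /= ?gl_io //; exact: io_in.
Qed.

Lemma FC1 b s F : cones s -> cone_face (io b @` s) (M' (io b @` s)) F ->
  exists G, cone_face s (MD s) G /\ F = io b @` G.
Proof.
move=> cs [k [c [u' [Mu' [nn ->]]]]]; rewrite M'E in Mu'.
set X := io b @` s.
have [v hv] := @choice 'I_k (D -> RR)
    (fun i v => MD s v /\ restr X (v \o gl) = u' i)
    (fun i => match Mu' i with ex_intro2 v Mv e => ex_intro _ v (conj Mv e) end).
have key y : s y ->
    \sum_(i < k) c i * u' i (io b y) = \sum_(i < k) c i * v i y.
  move=> sy; apply: eq_bigr => i _; have [_ <-] := hv i.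
  by rewrite restr_in /= ?gl_io //; exact: io_in.
exists [set y | s y /\ \sum_(i < k) c i * v i y = 0]; split.
  exists k, c, v; split; first by move=> i; case: (hv i).
  split => // y sy; rewrite -key //; apply: nn; exact: io_in.
apply/seteqP; split => p /=.
  move=> [[y sy <-] h0]; exists y => //; split => //; rewrite -key //.
move=> [y [sy h0] <-]; split; first exact: io_in.
by rewrite key.
Qed.

Lemma FC2 b s G : cones s -> cone_face s (MD s) G ->
  cone_face (io b @` s) (M' (io b @` s)) (io b @` G).
Proof.
move=> cs [k [c [v [Mv [nn ->]]]]]; rewrite M'E; set X := io b @` s.
have key y : s y -> \sum_(i < k) c i * restr X (v i \o gl) (io b y) =
    \sum_(i < k) c i * v i y.
  move=> sy; apply: eq_bigr => i _.
  by rewrite restr_in /= ?gl_io //; exact: io_in.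
exists k, c, (fun i => restr X (v i \o gl)); split.
  by move=> i; exists (v i).
split.
  by move=> p [y sy <-]; rewrite key //; apply: nn.
apply/seteqP; split => p /=.
  by move=> [y [sy h0] <-]; split; [exact: io_in | rewrite key].
move=> [[y sy <-] h0]; exists y => //; split => //; by rewrite -key.
Qed.

Lemma RI b s p : cones s -> (relint (io b @` s) (M' (io b @` s)) p <->
  (io b @` s) p /\ relint s (MD s) (gl p)).
Proof.
move=> cs; split.
  move=> [Xp hF]; split => //; have [sp ep] := io_gl Xp; split => // G hG Gp.
  have := hF _ (FC2 b cs hG); rewrite -ep => /(_ (io_in b Gp)) h.
  by rewrite -(gl_img b G) h gl_img.
move=> [Xp [sp hG]]; split => // F hF Fp.
have [G [hG' eF]] := FC1 cs hF; rewrite eF in Fp *.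
have [Gp _] := io_gl Fp.
by rewrite (hG G hG' Gp).
Qed.

Lemma img_eq b1 b2 s : cones s -> s <> tau -> io b1 @` s = io b2 @` s.
Proof.
move=> cs snt.
have nr y : s y -> ~ rel y by move=> sy ry; apply: snt; exact: rel_only sy ry.
apply/seteqP; split => p [y sy <-]; exists y => //; rewrite !io_nrel //; exact: nr.
Qed.

Lemma ri' p : exists! X, cones' X /\ relint X (M' X) p.
Proof.
have [s [[cs rs] _]] := D_ri (gl p).
exists (io (sheet p) @` s); split.
  split; first by exists s, (sheet p).
  apply/RI => //; split => //; exists (gl p); [exact: relint_sub rs|exact: io_sheet].
move=> Y [[s2 [b2 [cs2 ->]]] rY].
have [Yp rs2] := (RI b2 p cs2).1 rY.
have e := D_ri_uniq cs rs cs2 rs2; subst s2.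
have [st|snt] := pselect (s = tau); last exact: img_eq.
have [_ ep] := io_gl Yp.
have rp : rel (gl p) by move: rs; rewrite st.
by rewrite -ep sheet_io // gl_io.
Qed.

Lemma face' X F : cones' X -> cone_face X (M' X) F ->
  cones' F /\ M' F = [set restr F u | u in M' X].
Proof.
move=> [s [b [cs ->]]] hF; have [G [hG ->]] := FC1 cs hF.
have [cG MG] := D_face cs hG; split; first by exists G, b.
have Gs := face_sub hG.
have eq v : restr (io b @` G) (restr G v \o gl) =
    restr (io b @` G) (restr (io b @` s) (v \o gl)).
  apply/funext => p; have [Fp|nFp] := pselect ((io b @` G) p).
    have [Gp ep] := io_gl Fp.
    rewrite !restr_in //=; first by rewrite restr_in.
    by rewrite -ep; apply: io_in; apply: Gs.
  by rewrite !restr_out.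
rewrite !M'E MG; apply/seteqP; split => z /=.
  move=> [u [v Mv <-] <-]; exists (restr (io b @` s) (v \o gl)).
    by exists v.
  by rewrite eq.
move=> [u' [v Mv <-] <-]; exists (restr G v); first by exists v.
by rewrite eq.
Qed.

Lemma fin' : finite_set cones'.
Proof.
have hf : finite_set ((fun q : set D * bool => io q.2 @` q.1) @`
    (cones `*` [set: bool])).
  by apply: finite_image; apply: finite_setX; [exact: D_fin | exact: finite_finset].
apply: sub_finite_set hf.
by move=> X [s [b [cs ->]]]; exists (s, b).
Qed.

Lemma ax' : is_cone_complex cones' M'.
Proof.
split; first exact: fin'.
split; first by move=> X [s [b [cs ->]]]; apply: (closed_io tmax); apply: D_closed.
split; first by move=> X [s [b [cs ->]]]; apply: fg'.
split; first by move=> X [s [b [cs ->]]]; apply: ev'.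
split; first exact: face'.
exact: ri'.
Qed.

End PartC.



Section PartD.
Variables (D S : coneComplex) (w : D -> nat) (f : D -> S) (tau : set D).
Hypothesis hbc : is_branched_cover w f.
Hypothesis tmax : maximal_cone tau.
Hypothesis tram : ramified_along w tau.

Local Notation cones := (cc_cones D).
Local Notation MD := (cc_M D).
Local Notation rel := (crelint tau).
Local Notation T' := (Tc D tau).
Local Notation gl := (@gl D tau).
Local Notation io := (@iota D tau).

Definition DP : coneComplex := @ConeComplex (Tc D tau) (@cones' D tau) (@M' D tau)
  (ax' tmax).

Definition wP (p : DP) : nat :=
  if `[< rel (gl p) >] then (if sheet p then (w (gl p)).-1 else 1%N) else w (gl p).

Definition fP (p : DP) : S := f (gl p).

Lemma conD : cc_connected D. Proof. by case: hbc. Qed.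
Lemma conS : cc_connected S. Proof. by case: hbc => _ []. Qed.
Lemma wt : is_weight w. Proof. by case: hbc => _ [_ []]. Qed.
Lemma mor : is_morphism f. Proof. by case: hbc => _ [_ [_ []]]. Qed.
Lemma isoc s : cones s -> exists t, cc_cones S t /\
     f @` crelint s `<=` crelint t /\
     f @` s = t /\
     (forall x y, s x -> s y -> f x = f y -> x = y) /\
     [set restr s (u \o f) | u in cc_M S t] = MD s.
Proof. by case: hbc => _ [_ [_ [_ [h _]]]]; apply: h. Qed.
Lemma trc (U : set S) : open U -> connected U ->
     forall y, (f @^-1` U) y ->
     forall x1 x2, U x1 -> U x2 ->
       trace f w (connected_component (f @^-1` U) y) x1 =
       trace f w (connected_component (f @^-1` U) y) x2.
Proof. by case: hbc => _ [_ [_ [_ [_ h]]]]; apply: h. Qed.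

Lemma tau_nmin : ~ minimal_cone tau. Proof. by case: tram => _ []. Qed.

Lemma w_rel x : rel x -> (1 < w x)%N.
Proof.
case: tram => _ [_ [x0 [r0 w0]]] rx.
by rewrite ((wt.2 tau (tau_cone tmax) x x0) rx r0).
Qed.

Lemma w_relc x y : rel x -> rel y -> w x = w y.
Proof. by move=> rx ry; apply: (wt.2 tau (tau_cone tmax)). Qed.

Lemma min'_iff b s : cones s ->
  (@minimal_cone DP (io b @` s) <-> minimal_cone s).
Proof.
move=> cs; split.
  move=> [_ h]; split => // G [_ [cG hG]].
  have c1 : @cones' D tau (io b @` s) by exists s, b.
  have c2 : @cones' D tau (io b @` G) by exists G, b.
  have := h (io b @` G) (conj c1 (conj c2 (FC2 tau b cs hG))).
  by move=> e; rewrite -(gl_img tau b G) e gl_img.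
move=> [_ h]; split; first by exists s, b.
move=> F [_ [_ hF]]; have [G [hG ->]] := FC1 cs hF.
have [cG _] := D_face cs hG.
by rewrite (h G (conj cs (conj cG hG))).
Qed.

Lemma conD' : cc_connected DP.
Proof.
have [L [mL uL]] := conD.
have cL : cones L by case: mL.
have Lnt : L <> tau by move=> e; apply: tau_nmin; rewrite -e.
exists (io false @` L); split; first exact/(min'_iff false cL).
move=> Y hY; have [[s [b [cs eY]]] _] := hY.
rewrite eY in hY *; have ms := (min'_iff b cs).1 hY.
have <- := uL s ms.
exact: (img_eq tmax).
Qed.

Lemma wt' : is_weight wP.
Proof.
split.
  move=> p; rewrite /wP; case: asboolP => [r|nr]; last exact: wt.1.
  case: (sheet p) => //; by case: (w (gl p)) (w_rel r) => [|[|n]].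
move=> X [s [b [cs ->]]] p q rp rq.
have [Xp rsp] := (RI b p cs).1 rp.
have [Xq rsq] := (RI b q cs).1 rq.
have [_ ep] := io_gl Xp; have [_ eq] := io_gl Xq.
have [st|snt] := pselect (s = tau).
  have rgp : rel (gl p) by move: rsp; rewrite st.
  have rgq : rel (gl q) by move: rsq; rewrite st.
  rewrite /wP !asboolT // -ep -eq !sheet_io // !gl_io.
  by rewrite (w_relc rgp rgq).
have ngp := rel_disj tmax cs snt rsp.
have ngq := rel_disj tmax cs snt rsq.
rewrite /wP !asboolF //; exact: (wt.2 s cs).
Qed.

Lemma eqR (X : set T') (s : set D) (u : S -> RR) : gl @` X `<=` s ->
  restr X (restr s (u \o f) \o gl) = restr X (u \o fP).
Proof.
move=> Xs; apply/funext => p; have [Xp|nXp] := pselect (X p).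
  rewrite !restr_in //= restr_in //; apply: Xs; exists p => //.
by rewrite !restr_out.
Qed.

Lemma mor' : is_morphism fP.
Proof.
split.
  move=> p; apply: continuous_comp; [exact: cont_gl | exact: mor.1].
move=> X [s [b [cs ->]]]; have [t [ct [img Mt]]] := mor.2 s cs.
exists t; split => //; split.
  by move=> z [p Xp <-]; have [sp _] := io_gl Xp; apply: img; exists (gl p).
move=> u Mu; rewrite /= M'E; exists (restr s (u \o f)); first exact: Mt.
by apply: eqR; rewrite gl_img.
Qed.

Lemma iso' : forall sigma, cc_cones DP sigma -> exists t, cc_cones S t /\
     fP @` crelint sigma `<=` crelint t /\
     fP @` sigma = t /\
     (forall x y, sigma x -> sigma y -> fP x = fP y -> x = y) /\
     [set restr sigma (u \o fP) | u in cc_M S t] = cc_M DP sigma.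
Proof.
move=> X [s [b [cs ->]]]; have [t [ct [ri [img [inj Meq]]]]] := isoc cs.
exists t; split => //; split.
  move=> z [p rp <-]; have [_ rs] := (RI b p cs).1 rp.
  by apply: ri; exists (gl p).
split.
  rewrite -img; apply/seteqP; split => z.
    by move=> [p Xp <-]; have [sp _] := io_gl Xp; exists (gl p).
  by move=> [x sx <-]; exists (io b x); [exact: io_in | rewrite /fP gl_io].
split.
  move=> p q Xp Xq e; have [sp ep] := io_gl Xp; have [sq eq] := io_gl Xq.
  by rewrite -ep -eq (inj _ _ sp sq e).
rewrite /= M'E -Meq; apply/seteqP; split => z.
  move=> [u Mu <-]; exists (restr s (u \o f)); first by exists u.
  by apply: eqR; rewrite gl_img.
move=> [v [u Mu <-] <-]; exists u => //.
by rewrite eqR // gl_img.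
Qed.
End PartD.



Section PartE.
Variables (D S : coneComplex) (w : D -> nat) (f : D -> S) (tau : set D).
Hypothesis hbc : is_branched_cover w f.
Hypothesis tmax : maximal_cone tau.
Hypothesis tram : ramified_along w tau.

Local Notation cones := (cc_cones D).
Local Notation MD := (cc_M D).
Local Notation rel := (crelint tau).
Local Notation T' := (Tc D tau).
Local Notation gl := (@gl D tau).
Local Notation io := (@iota D tau).
Local Notation D' := (DP tmax).
Local Notation w' := (@wP D w tau tmax).
Local Notation f' := (@fP D S f tau tmax).

Lemma fib_fin s : finite_set (f @^-1` [set s]).
Proof.
apply: (@sub_finite_set _ _ (\bigcup_(sg in cones) (sg `&` f @^-1` [set s]))).
  move=> x fx; have [sg [[csg rsg] _]] := D_ri x.
  by exists sg => //; split => //; apply: relint_sub rsg.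
apply: bigcup_finite; first exact: D_fin.
move=> sg csg; have [t [_ [_ [_ [inj _]]]]] := isoc hbc csg.
have [[y [sy fy]]|none] := pselect (exists y, sg y /\ f y = s).
  apply: (sub_finite_set _ (finite_set1 y)) => z [sz fz].
  by apply: inj => //; rewrite fz fy.
apply: (sub_finite_set _ (finite_set0 _)) => z [sz fz]; apply: none.
by exists z.
Qed.

Lemma sum_pre (Z : set D) (phi : T' -> nat) : finite_set Z ->
  \sum_(p \in gl @^-1` Z) phi p =
  \sum_(z \in Z) phi (io false z) + \sum_(z \in Z `&` rel) phi (io true z).
Proof.
move=> fZ.
have -> : gl @^-1` Z = io false @` Z `|` io true @` (Z `&` rel).
  apply/seteqP; split => p /=.
    move=> Zp; rewrite -(io_sheet p); case e: (sheet p).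
      right; exists (gl p) => //; split => //.
      by case: p e Zp => // s _ _; apply: rel_inr.
    by left; exists (gl p).
  by case=> -[z zZ <-]; [|rewrite -/(io true z) gl_io; case: zZ].
rewrite fsbigU0.
- rewrite !fsbig_image //.
    by move=> x y _ _; apply: io_inj.
  by move=> x y _ _; apply: io_inj.
- exact: finite_image.
- by apply: finite_image; apply: sub_finite_set fZ => z [].
- move=> p [[z zZ e1] [z' [_ rz'] e2]]; rewrite -e2 in e1.
  by move/io_eq: e1 => [ezz [//|]]; rewrite ezz.
Qed.

Lemma sum_w' (Z : set D) : finite_set Z ->
  \sum_(p \in gl @^-1` Z) w' p = \sum_(z \in Z) w z.
Proof.
move=> fZ; rewrite sum_pre // (fsbigID rel Z) // [in RHS](fsbigID rel Z) //.
have fZr : finite_set (Z `&` rel) by apply: sub_finite_set fZ => z [].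
have -> : \sum_(z \in Z `&` rel) w' (io false z) = \sum_(z \in Z `&` rel) 1%N.
  apply: eq_fsbigr => z /set_mem [_ rz].
  by rewrite /wP gl_io asboolT // sheet_io.
have -> : \sum_(z \in Z `&` ~` rel) w' (io false z) = \sum_(z \in Z `&` ~` rel) w z.
  by apply: eq_fsbigr => z /set_mem [_ rz]; rewrite /wP gl_io asboolF.
have -> : \sum_(z \in Z `&` rel) w' (io true z) = \sum_(z \in Z `&` rel) (w z).-1.
  apply: eq_fsbigr => z /set_mem [_ rz].
  by rewrite /wP gl_io asboolT // sheet_io.
rewrite addrAC -fsbig_split //; congr (_ + _); apply: eq_fsbigr.
move=> z /set_mem [_ rz]; change (1 + (w z).-1 = w z)%N.
rewrite add1n prednK //; apply: ltn_trans (w_rel hbc tmax tram rz).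
by [].
Qed.


Lemma deg' x : trace f' w' setT x = trace f w setT x.
Proof.
rewrite /trace !setTI.
have -> : f' @^-1` [set x] = gl @^-1` (f @^-1` [set x]) by reflexivity.
exact: sum_w' (fib_fin x).
Qed.

Lemma mor_gl : is_morphism (gl : D' -> D).
Proof.
split; first exact: cont_gl.
move=> X [s [b [cs ->]]]; exists s; split; first by [].
split; first by rewrite gl_img.
by move=> u Mu; rewrite /= M'E; exists u.
Qed.

Lemma ge' : cover_ge w' w f' f.
Proof.
exists gl; split; first exact: mor_gl.
split => // x; rewrite /trace setTI sum_w' ?fsbig_set1 //; exact: finite_set1.
Qed.

Lemma sum_const (Z : set D) (k : nat) : finite_set Z ->
  \sum_(z \in Z) k = (k * \sum_(z \in Z) 1%N)%N.
Proof.
move=> fZ; rewrite !fsbig_finite //.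
change ((\sum_(z <- fset_set Z) k) = k * (\sum_(z <- fset_set Z) 1%N))%R.
rewrite mulr_sumr; apply: eq_bigr => i _; by rewrite mulr1.
Qed.

Lemma noniso' : ~ cover_iso w' w f' f.
Proof.
rewrite /cover_iso => -[g0 [hiso [fe _]]]; have [_ [h [_ [hg gh]]]] := hiso.
case: tram => _ [_ [x0 [r0 _]]].
set Z := f @^-1` [set f x0].
have fZ : finite_set Z := fib_fin (f x0).
have e1 : g0 @` (gl @^-1` Z) = Z.
  apply/seteqP; split => z.
    by move=> [p Zp <-]; rewrite /Z /= -fe.
  move=> Zz; exists (h z); last exact: gh.
  by rewrite /= /Z /= -[f (gl (h z))]/(f' (h z)) fe gh.
have e2 : \sum_(z \in Z) 1%N = \sum_(p \in gl @^-1` Z) 1%N.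
  rewrite -{1}e1 fsbig_image //.
  by move=> p q _ _ e; rewrite -(hg p) -(hg q) e.
rewrite sum_pre // in e2.
have fZr : finite_set (Z `&` rel) by apply: sub_finite_set fZ => z [].
have hx0 : (Z `&` rel) x0 by split.
rewrite (fsbigD1 x0 _ _ fZr hx0) in e2.
move: e2; change ((\sum_(z \in Z) 1%N)%R = (\sum_(z \in Z) 1%N)%R + (1 + \sum_(j \in (Z `&` rel) `\ x0) 1%N)%R -> False)%N.
by move=> /eqP; rewrite -{1}[X in X == _]addn0 eqn_add2l.
Qed.

End PartE.



Section PartF.
Variables (D S : coneComplex) (w : D -> nat) (f : D -> S) (tau : set D).
Hypothesis hbc : is_branched_cover w f.
Hypothesis tmax : maximal_cone tau.
Hypothesis tram : ramified_along w tau.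

Local Notation cones := (cc_cones D).
Local Notation MD := (cc_M D).
Local Notation rel := (crelint tau).
Local Notation T' := (Tc D tau).
Local Notation gl := (@gl D tau).
Local Notation io := (@iota D tau).
Local Notation D' := (DP tmax).
Local Notation w' := (@wP D w tau tmax).
Local Notation f' := (@fP D S f tau tmax).

Lemma trc' (U : set S) : open U -> connected U ->
     forall y, (f' @^-1` U) y ->
     forall x1 x2, U x1 -> U x2 ->
       trace f' w' (connected_component (f' @^-1` U) y) x1 =
       trace f' w' (connected_component (f' @^-1` U) y) x2.
Proof.
move=> oU cU y' Ay' x1 x2 U1 U2.
set A := f @^-1` U.
set C := connected_component A (gl y').
set C' := connected_component (f' @^-1` U) y'.
have AC : A (gl y') := Ay'.
have hC := trc hbc oU cU AC U1 U2.
have cC : connected C by exact: component_connected.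
have cC' : connected C' by exact: component_connected.
have C'y : C' y' := connected_component_refl Ay'.
have Cy : C (gl y') := connected_component_refl AC.
have C'A : C' `<=` f' @^-1` U by exact: connected_component_sub.
have CA : C `<=` A by exact: connected_component_sub.
have glC' : gl @` C' `<=` C.
  apply: connected_component_max; first by exists y'.
    by move=> z [p /C'A Up <-].
  apply: connected_continuous_connected => //.
  exact: continuous_subspaceT (@cont_gl D tau).
have fZ x : finite_set (C `&` f @^-1` [set x]).
  by apply: sub_finite_set (fib_fin hbc x) => z [].
have [[c0 [Cc0 nc0]]|Crel] := pselect (exists c, C c /\ ~ rel c).
  have eC' : C' = gl @^-1` C.
    apply/seteqP; split => p; first by move=> C'p; apply: glC'; exists p.
    move=> Cp.
    have sub : gl @^-1` C `<=` io false @` C `|` io true @` C.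
      move=> q Cq; rewrite -(io_sheet q).
      by case: (sheet q); [right|left]; exists (gl q).
    apply: (connected_component_max (B := io false @` C `|` io true @` C)).
    - by apply: sub; rewrite /preimage /= -(io_sheet y') gl_io.
    - by move=> q [] [c Cc <-]; [|rewrite /preimage /= /fP -/(io true c) gl_io]; apply: CA.
    - apply: connectedU.
        by exists (io false c0); split; [exists c0|exists c0 => //; rewrite !io_nrel].
        apply: connected_continuous_connected => //.
        exact: continuous_subspaceT (@cont_io D tau false).
      apply: connected_continuous_connected => //.
      exact: continuous_subspaceT (@cont_io D tau true).
    - exact: sub.
  have tr x : trace f' w' C' x = trace f w C x.
    rewrite /trace eC'.
    have -> : gl @^-1` C `&` f' @^-1` [set x] = gl @^-1` (C `&` f @^-1` [set x]).
      reflexivity.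
    exact (sum_w' hbc tmax tram (fZ x)).
  by rewrite /C' !tr.
have Cr : C `<=` rel.
  by move=> c Cc; apply: contrapT => nc; apply: Crel; exists c.
set sb := sheet y'.
have eC' : C' = io sb @` C.
  apply/seteqP; split => p; last first.
    move: p; apply: connected_component_max.
    - by exists (gl y') => //; rewrite io_sheet.
    - by move=> q [c Cc <-]; rewrite /preimage /= /fP gl_io; apply: CA.
    - apply: connected_continuous_connected => //.
      exact: continuous_subspaceT (@cont_io D tau sb).
  move=> C'p.
  have rC' q : C' q -> rel (gl q) by move=> C'q; apply: Cr; apply: glC'; exists q.
  have eB : C' `&` Osh sb = C'.
    apply: cC'.
    - by exists y'; split => //; split => //; apply: rC'.
    - by exists (Osh sb) => //; exact: open_Osh tmax sb.
    - exists (~` Osh (~~ sb)); first by apply: open_closedC; exact: open_Osh tmax _.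
      apply/seteqP; split => q [C'q h]; split => //.
        by move=> [e _]; case: h => e' _; move: e e'; case: (sheet q); case: sb.
      split; last exact: rC'.
      apply: contrapT => ne; apply: h; split; last exact: rC'.
      by move: ne; case: (sheet q); case: sb.
  have := C'p; rewrite -eB => -[_ [sp _]].
  exists (gl p); first by apply: glC'; exists p.
  by rewrite -sp io_sheet.
set m := w (gl y').
set k := if sb then m.-1 else 1%N.
have Ny : rel (gl y') by apply: Cr.
have tr' x : trace f' w' C' x = (k * \sum_(z \in C `&` f @^-1` [set x]) 1%N)%N.
  rewrite /trace eC'.
  have -> : io sb @` C `&` f' @^-1` [set x] = io sb @` (C `&` f @^-1` [set x]).
    apply/seteqP; split => p.
      by move=> [[c Cc <-] e]; exists c => //; split => //; move: e; rewrite /preimage /= /fP gl_io.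
    by move=> [c [Cc e] <-]; split; [exists c|rewrite /preimage /= /fP gl_io].
  rewrite fsbig_image; last by move=> a b _ _; apply: io_inj.
  rewrite -sum_const //; apply: eq_fsbigr => z /set_mem [Cz _].
  have rz := Cr _ Cz.
  by rewrite /wP gl_io asboolT // sheet_io // /k /m (w_relc hbc tmax rz Ny).
have tr x : trace f w C x = (m * \sum_(z \in C `&` f @^-1` [set x]) 1%N)%N.
  rewrite /trace -sum_const //; apply: eq_fsbigr => z /set_mem [Cz _].
  exact: (w_relc hbc tmax (Cr _ Cz) Ny).
rewrite !tr'; move: hC; rewrite -/C !tr => /eqP; rewrite eqn_pmul2l.
  by move/eqP ->.
by apply: ltn_trans (w_rel hbc tmax tram Ny).
Qed.
End PartF.


Unset Implicit Arguments.
Theorem lemma2p29 (D S : coneComplex) (w : D -> nat) (f : D -> S) :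
  is_branched_cover w f -> maximal_cover w f ->
  forall tau : set D, maximal_cone tau -> ~ ramified_along w tau.
Proof.
move=> hbc hmax tau tmax tram.
apply: (noniso' (tmax:=tmax) hbc tram).
apply: hmax.
- split; first exact: (conD' hbc tmax tram).
  split; first exact: (conS hbc).
  split; first exact: (wt' hbc tmax tram).
  split; first exact: (mor' hbc tmax).
  split; first exact: (iso' hbc).
  exact: (trc' (tmax:=tmax) hbc tram).
- exact: (deg' hbc tmax tram).
- exact: (ge' hbc tmax tram).
Qed.
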